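(* Let $f:[0,\infty)\to\mathbb{C}$ be smooth with support in $[0,\rho]$ for some $\rho<1$. For $i,j\in\mathbb{N}_0$ and $t\in(0,1)$ let $$G_{i,j}(t)=\int_{1-t}^{1}u f(u)\,[Q(t,u)]^{i}\,(u^{2}+1-t^{2})^{j}\,\mathrm{d}u,\qquad Q(t,u)=((1+t)^2-u^2)(u^2-(1-t)^2).$$ Then for every $r\in\mathbb{N}_0$ and every $m\in\mathbb{N}_0$, $$\sum_{l=0}^{\lfloor r/2\rfloor}\frac{2^{2l}\,r!}{l!\,(r-2l)!}\frac{(m+r)!}{(m+r-l)!}\,[D^{r-2l}G_{m+r-l,0}](t)=4^{r}(m+1)\cdots(m+r)\,G_{m,r}(t),\qquad t\in(0,1).$$
   Context: $D$ denotes the operator $(D\varphi)(t)=\frac{1}{t}\varphi'(t)$ and $D^{j}$ its $j$-fold iterate ($D^0$ the identity); $\lfloor\cdot\rfloor$ is the floor function; the empty product $(m+1)\cdots(m+r)$ for $r=0$ equals $1$. *)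

(* Defs.v *)
From Stdlib Require Import Reals.
From Stdlib Require Import Factorial.
From Coquelicot Require Import Coquelicot.
Open Scope R_scope.

Definition CRInt (g : R -> C) (a b : R) : C :=
  (RInt (fun u => Re (g u)) a b, RInt (fun u => Im (g u)) a b).

Definition CDerive (g : R -> C) (t : R) : C :=
  (Derive (fun s => Re (g s)) t, Derive (fun s => Im (g s)) t).

Definition Dop (phi : R -> C) : R -> C :=
  fun t => (RtoC (/ t) * CDerive phi t)%C.
Definition Dn (j : nat) (phi : R -> C) : R -> C := Nat.iter j Dop phi.

Definition smooth_on_nonneg (f : R -> C) : Prop :=
  forall (n : nat) (x : R), 0 < x ->
    ex_derive_n (fun u => Re (f u)) n x /\ ex_derive_n (fun u => Im (f u)) n x.

Definition Q (t u : R) : R := ((1 + t) ^ 2 - u ^ 2) * (u ^ 2 - (1 - t) ^ 2).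

Definition G (f : R -> C) (i j : nat) (t : R) : C :=
  CRInt (fun u => (RtoC (u * Q t u ^ i * (u ^ 2 + 1 - t ^ 2) ^ j) * f u)%C) (1 - t) 1.

Fixpoint rising (m r : nat) : nat :=
  match r with
  | O => 1%nat
  | S r' => (rising m r' * (m + r))%nat
  end.

(* Main.v *)
Require Import Defs.
From Stdlib Require Import Reals Lra Lia.
From Stdlib Require Import Factorial.
From Coquelicot Require Import Coquelicot.
Open Scope R_scope.

Definition PP (t u : R) : R := u ^ 2 + 1 - t ^ 2.
Definition hh (g : R -> R) (a b : nat) (z v : R) : R := v * Q z v ^ a * PP z v ^ b * g v.
Definition Gr (g : R -> R) (a b : nat) (t : R) : R := RInt (hh g a b t) (1 - t) 1.

Lemma loc01 (P : R -> Prop) t : 0 < t < 1 -> (forall s, 0 < s < 1 -> P s) -> locally t P.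
Proof.
  intros Ht H. apply (locally_interval _ _ (Finite 0) (Finite 1)); simpl; try lra.
  intros; apply H; lra.
Qed.

Lemma poly_cont a b z v : continuous (fun v => v * Q z v ^ a * PP z v ^ b) v.
Proof.
  apply (@ex_derive_continuous R_AbsRing R_NormedModule). unfold Q, PP. auto_derive. easy.
Qed.

Lemma hh_cont g (Hg : forall u, 0 < u -> continuous g u) a b z v :
  0 < v -> continuous (hh g a b z) v.
Proof.
  intros Hv. unfold hh.
  apply (continuous_mult (fun v => v * Q z v ^ a * PP z v ^ b) g).
  apply poly_cont. apply Hg; lra.
Qed.

Lemma hh_exRInt g (Hg : forall u, 0 < u -> continuous g u) a b z c d :
  0 < c -> 0 < d -> ex_RInt (hh g a b z) c d.
Proof.
  intros Hc Hd. apply (@ex_RInt_continuous R_CompleteNormedModule). intros w Hw.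
  apply hh_cont; auto.
  assert (0 < Rmin c d) by (apply Rmin_glb_lt; lra). lra.
Qed.

Lemma dQ z v : is_derive (fun z => Q z v) z (4 * z * PP z v).
Proof.
  unfold Q, PP. auto_derive; [easy|]. ring.
Qed.

Lemma dPP z v : is_derive (fun z => PP z v) z (- 2 * z).
Proof.
  unfold PP. auto_derive; [easy|]. ring.
Qed.

Definition dh (g : R -> R) (a b : nat) (z v : R) : R :=
  z * (4 * INR (S a) * hh g a (S b) z v - 2 * INR b * hh g (S a) (pred b) z v).

Lemma hh_deriv g a b z v : is_derive (fun z => hh g (S a) b z v) z (dh g a b z v).
Proof.
  assert (H1 := is_derive_pow _ (S a) _ _ (dQ z v)).
  assert (H2 := is_derive_pow _ b _ _ (dPP z v)).
  assert (H3 := is_derive_mult _ _ _ _ _ H1 H2 ltac:(intros; apply Rmult_comm)).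
  simpl in H3. unfold mult, plus in H3; simpl in H3.
  assert (H4 : is_derive (fun t => (v * g v) * (Q t v ^ S a * PP t v ^ b)) z
     ((v * g v) * (INR (S a) * (4 * z * PP z v) * Q z v ^ a * PP z v ^ b +
        Q z v ^ S a * (INR b * (-2 * z) * PP z v ^ Init.Nat.pred b)))).
  { apply is_derive_scal. exact H3. }
  replace (dh g a b z v) with ((v * g v) * (INR (S a) * (4 * z * PP z v) * Q z v ^ a * PP z v ^ b +
        Q z v ^ S a * (INR b * (-2 * z) * PP z v ^ Init.Nat.pred b))).
  - eapply is_derive_ext; [| exact H4]. intros t; unfold hh; simpl; ring.
  - unfold dh, hh. simpl. ring.
Qed.

Lemma c2_pow f x y n : continuity_2d_pt f x y -> continuity_2d_pt (fun u v => f u v ^ n) x y.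
Proof.
  intros H. induction n.
  - simpl. apply continuity_2d_pt_const.
  - simpl. apply (continuity_2d_pt_mult f (fun u v => f u v ^ n)); auto.
Qed.

Lemma c2_Q x y : continuity_2d_pt (fun u v => Q u v) x y.
Proof.
  unfold Q.
  apply (continuity_2d_pt_mult (fun u v => (1 + u) ^ 2 - v ^ 2) (fun u v => v ^ 2 - (1 - u) ^ 2)).
  - apply (continuity_2d_pt_minus (fun u v => (1 + u) ^ 2) (fun u v => v ^ 2)).
    + apply (c2_pow (fun u v => 1 + u)). apply (continuity_2d_pt_plus (fun u v => 1) (fun u v => u)).
      apply continuity_2d_pt_const. apply continuity_2d_pt_id1.
    + apply (c2_pow (fun u v => v)). apply continuity_2d_pt_id2.
  - apply (continuity_2d_pt_minus (fun u v => v ^ 2) (fun u v => (1 - u) ^ 2)).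
    + apply (c2_pow (fun u v => v)). apply continuity_2d_pt_id2.
    + apply (c2_pow (fun u v => 1 - u)). apply (continuity_2d_pt_minus (fun u v => 1) (fun u v => u)).
      apply continuity_2d_pt_const. apply continuity_2d_pt_id1.
Qed.

Lemma c2_PP x y : continuity_2d_pt (fun u v => PP u v) x y.
Proof.
  unfold PP.
  apply (continuity_2d_pt_minus (fun u v => v ^ 2 + 1) (fun u v => u ^ 2)).
  - apply (continuity_2d_pt_plus (fun u v => v ^ 2) (fun u v => 1)).
    + apply (c2_pow (fun u v => v)). apply continuity_2d_pt_id2.
    + apply continuity_2d_pt_const.
  - apply (c2_pow (fun u v => u)). apply continuity_2d_pt_id1.
Qed.

Section Real.
Variable g : R -> R.
Hypothesis Hg : forall u, 0 < u -> continuous g u.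

Lemma c2_hh a b x y : 0 < y -> continuity_2d_pt (fun u v => hh g a b u v) x y.
Proof.
  intros Hy. unfold hh.
  apply (continuity_2d_pt_mult (fun u v => v * Q u v ^ a * PP u v ^ b) (fun u v => g v)).
  - apply (continuity_2d_pt_mult (fun u v => v * Q u v ^ a) (fun u v => PP u v ^ b)).
    + apply (continuity_2d_pt_mult (fun u v => v) (fun u v => Q u v ^ a)).
      * apply continuity_2d_pt_id2.
      * apply (c2_pow (fun u v => Q u v)). apply c2_Q.
    + apply (c2_pow (fun u v => PP u v)). apply c2_PP.
  - apply (continuity_1d_2d_pt_comp g (fun u v => v)).
    + apply continuity_pt_filterlim. apply Hg. exact Hy.
    + apply continuity_2d_pt_id2.
Qed.

Lemma c2_dh a b x y : 0 < y -> continuity_2d_pt (fun u v => Derive (fun z => hh g (S a) b z v) u) x y.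
Proof.
  intros Hy.
  apply continuity_2d_pt_ext with (f := fun u v => dh g a b u v).
  { intros; symmetry; apply is_derive_unique, hh_deriv. }
  unfold dh.
  apply (continuity_2d_pt_mult (fun u v => u)).
  apply continuity_2d_pt_id1.
  apply (continuity_2d_pt_minus (fun u v => 4 * INR (S a) * hh g a (S b) u v)
    (fun u v => 2 * INR b * hh g (S a) (pred b) u v)).
  - apply (continuity_2d_pt_mult (fun u v => 4 * INR (S a))). apply continuity_2d_pt_const.
    apply c2_hh; auto.
  - apply (continuity_2d_pt_mult (fun u v => 2 * INR b)). apply continuity_2d_pt_const.
    apply c2_hh; auto.
Qed.

Lemma Gr_deriv a b t : 0 < t < 1 ->
  is_derive (Gr g (S a) b) t
    (t * (4 * INR (S a) * Gr g a (S b) t - 2 * INR b * Gr g (S a) (pred b) t)).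
Proof.
  intros Ht.
  assert (Hd : is_derive (fun x => 1 - x) t (-1)) by (auto_derive; [easy | ring]).
  assert (HH := is_derive_RInt_param_bound_comp_aux2 (fun z u => hh g (S a) b z u)
     (fun x => 1 - x) 1 t (-1)).
  unfold Gr.
  replace (t * (4 * INR (S a) * RInt (hh g a (S b) t) (1 - t) 1 -
      2 * INR b * RInt (hh g (S a) (pred b) t) (1 - t) 1))
   with (RInt (fun u => Derive (fun z => hh g (S a) b z u) t) (1 - t) 1 +
         - hh g (S a) b t (1 - t) * -1).
  apply HH; clear HH.
  - apply filter_forall. intros y. apply hh_exRInt; auto; lra.
  - exists (mkposreal ((1 - t) / 2) ltac:(lra)). apply filter_forall. intros y.
    apply hh_exRInt; auto; simpl; lra.
  - exact Hd.
  - exists (mkposreal 1 Rlt_0_1). apply filter_forall. intros y u _.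
    eexists. apply hh_deriv.
  - intros u Hu. apply c2_dh.
    assert (Rmin (1 - t) 1 = 1 - t) by (apply Rmin_left; lra). lra.
  - exists (mkposreal ((1 - t) / 2) ltac:(lra)). intros u v _ Hv. simpl in Hv.
    apply c2_dh. apply Rabs_def2 in Hv. lra.
  - apply continuity_pt_filterlim. apply hh_cont; auto; lra.
  - assert (HQ : Q t (1 - t) = 0) by (unfold Q; ring).
    assert (H0 : hh g (S a) b t (1 - t) = 0) by (unfold hh; rewrite HQ; simpl; ring).
    rewrite H0.
    rewrite (RInt_ext _ (fun u => scal t (minus (scal (4 * INR (S a)) (hh g a (S b) t u))
                                  (scal (2 * INR b) (hh g (S a) (pred b) t u))))).
    2:{ intros u _. rewrite (is_derive_unique _ _ _ (hh_deriv _ _ _ _ _)). unfold dh, scal, minus, plus, opp; simpl.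
        unfold mult; simpl. ring. }
    assert (E1 : ex_RInt (hh g a (S b) t) (1 - t) 1) by (apply hh_exRInt; auto; lra).
    assert (E2 : ex_RInt (hh g (S a) (pred b) t) (1 - t) 1) by (apply hh_exRInt; auto; lra).
    rewrite (RInt_scal (V:=R_CompleteNormedModule)).
    2:{ apply @ex_RInt_minus; apply @ex_RInt_scal; assumption. }
    rewrite (RInt_minus (V:=R_CompleteNormedModule)).
    2,3: apply @ex_RInt_scal; assumption.
    rewrite !(RInt_scal (V:=R_CompleteNormedModule)); try assumption.
    unfold scal, minus, plus, opp; simpl. unfold mult; simpl. ring.
Qed.

Definition Dr (phi : R -> R) (t : R) : R := / t * Derive phi t.
Definition Dnr (k : nat) (phi : R -> R) : R -> R := Nat.iter k Dr phi.

Inductive good (n : nat) : (R -> R) -> Prop :=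
| g0 : good n (fun _ => 0)
| gG : forall c a b, (n <= a)%nat -> good n (fun t => c * Gr g a b t)
| gadd : forall phi psi, good n phi -> good n psi -> good n (fun t => phi t + psi t)
| gext : forall phi psi, good n phi -> (forall t, 0 < t < 1 -> phi t = psi t) -> good n psi.

Lemma good_ex n phi : good (S n) phi -> forall t, 0 < t < 1 -> ex_derive phi t.
Proof.
  induction 1; intros t Ht.
  - apply ex_derive_const.
  - destruct a as [|a]; [lia|]. apply ex_derive_scal. eexists. apply Gr_deriv; auto.
  - apply (ex_derive_plus (K:=R_AbsRing) (V:=R_NormedModule) phi psi); auto.
  - apply (ex_derive_ext_loc phi). apply loc01; auto. apply IHgood; auto.
Qed.

Lemma good_D n phi : good (S n) phi -> good n (Dr phi).
Proof.
  induction 1.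
  - apply gext with (fun _ => 0). apply g0. intros t Ht. unfold Dr. rewrite Derive_const. ring.
  - destruct a as [|a]; [lia|].
    apply gext with (fun t => (c * (4 * INR (S a))) * Gr g a (S b) t + (- (c * (2 * INR b))) * Gr g (S a) (pred b) t).
    + apply gadd; apply gG; lia.
    + intros t Ht. unfold Dr. rewrite Derive_scal. rewrite (is_derive_unique _ _ _ (Gr_deriv _ _ _ Ht)).
      field. lra.
  - apply gext with (fun t => Dr phi t + Dr psi t).
    + apply gadd; auto.
    + intros t Ht. unfold Dr. rewrite Derive_plus. ring.
      apply (good_ex n); auto. apply (good_ex n); auto.
  - apply gext with (Dr phi); auto.
    intros t Ht. unfold Dr. f_equal. apply Derive_ext_loc. apply loc01; auto.
Qed.

Lemma good_Dn k i : (k <= i)%nat -> good (i - k) (Dnr k (Gr g i 0)).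
Proof.
  induction k; intros Hk.
  - apply gext with (fun t => 1 * Gr g i 0 t). apply gG; lia. intros; simpl; ring.
  - replace (i - k)%nat with (S (i - S k)) in IHk by lia.
    apply good_D. apply IHk. lia.
Qed.

Lemma ex_Dn k i t : (k < i)%nat -> 0 < t < 1 -> ex_derive (Dnr k (Gr g i 0)) t.
Proof.
  intros Hk Ht. apply (good_ex (i - k - 1)); auto.
  replace (S (i - k - 1)) with (i - k)%nat by lia. apply good_Dn; lia.
Qed.

End Real.

Lemma Derive_sum (F : nat -> R -> R) N t :
  (forall l, (l <= N)%nat -> ex_derive (F l) t) ->
  ex_derive (fun s => sum_n (fun l => F l s) N) t /\
  Derive (fun s => sum_n (fun l => F l s) N) t = sum_n (fun l => Derive (F l) t) N.
Proof.
  induction N; intros H.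
  - split.
    + apply (ex_derive_ext (F 0%nat)). intros s; rewrite sum_O; reflexivity. apply H; lia.
    + rewrite sum_O. apply Derive_ext. intros s; rewrite sum_O; reflexivity.
  - destruct IHN as [E D]; [intros; apply H; lia|].
    split.
    + apply (ex_derive_ext (fun s => sum_n (fun l => F l s) N + F (S N) s)). intros s; rewrite sum_Sn; reflexivity.
      apply (ex_derive_plus (K:=R_AbsRing) (V:=R_NormedModule) (fun s => sum_n (fun l => F l s) N) (F (S N))); auto.
    + rewrite sum_Sn. rewrite <- D.
      rewrite (Derive_ext _ (fun s => sum_n (fun l => F l s) N + F (S N) s)).
      2:{ intros s; rewrite sum_Sn; reflexivity. }
      apply Derive_plus; auto.
Qed.

Lemma sum_shift (F : nat -> R) N : sum_n F (S N) = F 0%nat + sum_n (fun l => F (S l)) N.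
Proof.
  induction N.
  - rewrite sum_Sn, !sum_O. reflexivity.
  - rewrite sum_Sn, IHN, (sum_Sn (fun l => F (S l))). unfold plus; simpl. ring.
Qed.

Lemma sum_zero_tail (F : nat -> R) N M : (N <= M)%nat ->
  (forall l, (N < l <= M)%nat -> F l = 0) -> sum_n F M = sum_n F N.
Proof.
  induction M; intros H1 H2.
  - replace N with 0%nat by lia. reflexivity.
  - destruct (Nat.eq_dec N (S M)) as [->|Hn]; [reflexivity|].
    rewrite sum_Sn, IHM; try lia.
    + rewrite H2 by lia. unfold plus; simpl. ring.
    + intros; apply H2; lia.
Qed.

Definition cf (r m l : nat) : R :=
  2 ^ (2 * l) * INR (fact r) / (INR (fact l) * INR (fact (r - 2 * l)))
             * (INR (fact (m + r)) / INR (fact (m + r - l))).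

Lemma cf0 r m : cf r m 0 = 1.
Proof.
  unfold cf. replace (r - 2 * 0)%nat with r by lia. replace (m + r - 0)%nat with (m + r)%nat by lia.
  simpl. field. split; apply INR_fact_neq_0.
Qed.

Lemma cf_rec r m l : (2 * S l <= r)%nat ->
  cf (S r) m (S l) = cf r (S m) (S l) + 8 * INR r * INR (m + r + 1) * cf (pred r) (S m) l.
Proof.
  intros H. destruct r as [|r']; [lia|]. simpl pred.
  destruct (Nat.le_exists_sub (2 * l + 1) r') as [s [Hr _]]; [lia|].
  rewrite Nat.add_comm in Hr.
  unfold cf.
  replace (S (S r') - 2 * S l)%nat with (S s) by lia.
  replace (S r' - 2 * S l)%nat with s by lia.
  replace (r' - 2 * l)%nat with (S s) by lia.
  replace (m + S (S r'))%nat with (S (S (m + r'))) by lia.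
  replace (S m + S r')%nat with (S (S (m + r'))) by lia.
  replace (S m + r')%nat with (S (m + r')) by lia.
  replace (S (S (m + r')) - S l)%nat with (S (m + r') - l)%nat by lia.
  replace (S (m + r') - l)%nat with (S (m + r') - l)%nat by lia.
  replace (2 * S l)%nat with (S (S (2 * l))) by lia.
  rewrite (fact_simpl (S r')), (fact_simpl r'), (fact_simpl (S (m + r'))), (fact_simpl (m + r')),
    (fact_simpl s), (fact_simpl l).
  assert (HrR : INR r' = 2 * INR l + 1 + INR s) by (rewrite Hr, !plus_INR, mult_INR; simpl; ring).
  rewrite !mult_INR, !S_INR, !plus_INR, !S_INR.
  rewrite HrR.
  simpl pow.
  assert (F1 := INR_fact_neq_0 (2 * l + 1 + s)). rewrite <- Hr in F1.
  assert (F2 := INR_fact_neq_0 s). assert (F3 := INR_fact_neq_0 l).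
  assert (F4 := INR_fact_neq_0 (m + r')). assert (F5 := INR_fact_neq_0 (S (m + r') - l)).
  assert (P1 := pos_INR l). assert (P2 := pos_INR s). assert (P3 := pos_INR m).
  change (INR 0) with 0. field. repeat split; lra.
Qed.

Lemma cf_top r m l : (2 * S l = S r)%nat ->
  cf (S r) m (S l) = 8 * INR r * INR (m + r + 1) * cf (pred r) (S m) l.
Proof.
  intros H. destruct r as [|r']; [lia|]. simpl pred.
  assert (Hr : r' = (2 * l)%nat) by lia.
  unfold cf.
  replace (S (S r') - 2 * S l)%nat with 0%nat by lia.
  replace (r' - 2 * l)%nat with 0%nat by lia.
  replace (m + S (S r'))%nat with (S (S (m + r'))) by lia.
  replace (S m + r')%nat with (S (m + r')) by lia.
  replace (S (S (m + r')) - S l)%nat with (S (m + r') - l)%nat by lia.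
  replace (2 * S l)%nat with (S (S (2 * l))) by lia.
  rewrite (fact_simpl (S r')), (fact_simpl r'), (fact_simpl (S (m + r'))), (fact_simpl (m + r')),
    (fact_simpl l).
  assert (HrR : INR r' = 2 * INR l) by (rewrite Hr, mult_INR; simpl; ring).
  rewrite !mult_INR, !S_INR, !plus_INR, !S_INR.
  rewrite HrR.
  simpl pow. change (fact 0) with 1%nat.
  assert (F1 := INR_fact_neq_0 r').
  assert (F3 := INR_fact_neq_0 l).
  assert (F4 := INR_fact_neq_0 (m + r')). assert (F5 := INR_fact_neq_0 (S (m + r') - l)).
  assert (P1 := pos_INR l). assert (P3 := pos_INR m).
  change (INR 0) with 0. change (INR 1) with 1. field. repeat split; lra.
Qed.

Lemma div2_facts n : (n = 2 * (n / 2) + n mod 2 /\ n mod 2 < 2)%nat.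
Proof. split. apply Nat.div_mod; lia. apply Nat.mod_upper_bound; lia. Qed.

Lemma div2_SS r : (S (S r) / 2 = S (r / 2))%nat.
Proof. replace (S (S r)) with (r + 1 * 2)%nat by lia. rewrite Nat.div_add; lia. Qed.


Lemma sum_rec r m (X : nat -> R) :
  sum_n (fun l => cf (S r) m l * X l) (S r / 2)
  = sum_n (fun l => cf r (S m) l * X l) (r / 2)
    + 8 * INR r * INR (m + r + 1) * sum_n (fun l => cf (pred r) (S m) l * X (S l)) (pred r / 2).
Proof.
  destruct r as [|r'].
  - change (1 / 2)%nat with 0%nat. change (0 / 2)%nat with 0%nat. simpl pred.
    rewrite !sum_O, !cf0. simpl INR. match goal with |- ?a = ?b => change (@eq R a b) end. ring.
  - simpl pred. rewrite div2_SS.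
    set (K := 8 * INR (S r') * INR (m + S r' + 1)).
    pose (A := fun l => if (2 * l <=? S r')%nat then cf (S r') (S m) l * X l else 0).
    pose (B := fun l => match l with 0%nat => 0 | S l' => K * (cf r' (S m) l' * X l) end).
    rewrite (sum_n_ext_loc _ (fun l => plus (A l) (B l))).
    2:{ intros l Hl. unfold A, B. destruct l as [|l'].
        - rewrite !cf0. simpl. unfold plus; simpl. match goal with |- ?a = ?b => change (@eq R a b) end. ring.
        - destruct (Nat.leb_spec (2 * S l') (S r')) as [Hle|Hgt].
          + rewrite cf_rec by lia. unfold plus, K; simpl. ring.
          + rewrite cf_top. unfold plus, K; simpl. ring.
            destruct (div2_facts r'). lia. }
    rewrite sum_n_plus.
    change (sum_n A (S (r'/2)) + sum_n B (S (r'/2)) = sum_n (fun l => cf (S r') (S m) l * X l) (S r' / 2) + K * sum_n (fun l => cf r' (S m) l * X (S l)) (r' / 2)).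
    f_equal.
    + rewrite (sum_zero_tail A (S r' / 2)).
      * apply sum_n_ext_loc. intros l Hl. unfold A.
        destruct (Nat.leb_spec (2 * l) (S r')) as [Hle|Hgt]; [reflexivity|].
        destruct (div2_facts (S r')). lia.
      * destruct (div2_facts (S r')), (div2_facts r'). lia.
      * intros l Hl. unfold A.
        destruct (Nat.leb_spec (2 * l) (S r')) as [Hle|Hgt]; [|reflexivity].
        destruct (div2_facts (S r')). lia.
    + rewrite sum_shift. unfold B at 1.
      rewrite <- (sum_n_mult_l K). apply Rplus_0_l.
Qed.

Lemma rising_S m r : rising m (S r) = ((m + 1) * rising (S m) r)%nat.
Proof.
  induction r.
  - simpl. lia.
  - change (rising m (S (S r))) with (rising m (S r) * (m + S (S r)))%nat.
    rewrite IHr. simpl. lia.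
Qed.

Section Main.
Variable g : R -> R.
Hypothesis Hg : forall u, 0 < u -> continuous g u.

Definition LHSr (r m : nat) (t : R) : R :=
  sum_n (fun l => cf r m l * Dnr (r - 2 * l) (Gr g (m + r - l) 0) t) (r / 2).

Definition Claim (r : nat) : Prop := forall m t, 0 < t < 1 ->
  LHSr r m t = 4 ^ r * INR (rising m r) * Gr g m r t.

Lemma DLHS r m t : 0 < t < 1 ->
  Dr (LHSr r (S m)) t = sum_n (fun l => cf r (S m) l * Dnr (S (r - 2 * l)) (Gr g (S m + r - l) 0) t) (r / 2).
Proof.
  intros Ht. unfold Dr, LHSr.
  destruct (Derive_sum (fun l s => cf r (S m) l * Dnr (r - 2 * l) (Gr g (S m + r - l) 0) s) (r / 2) t)
    as [_ E].
  { intros l Hl. apply ex_derive_scal. apply ex_Dn; auto.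
    destruct (div2_facts r). lia. }
  rewrite E. rewrite <- (sum_n_mult_l (/ t)). apply sum_n_ext_loc. intros l Hl.
  rewrite Derive_scal. unfold mult; simpl. unfold Dr. ring.
Qed.

Lemma step r : Claim r -> Claim (pred r) -> Claim (S r).
Proof.
  intros IH1 IH2 m t Ht.
  unfold LHSr.
  assert (E := sum_rec r m (fun l => Dnr (S r - 2 * l) (Gr g (m + S r - l) 0) t)).
  cbv beta in E. rewrite E. clear E.
  assert (E1 : sum_n (fun l => cf r (S m) l * Dnr (S r - 2 * l) (Gr g (m + S r - l) 0) t) (r / 2)
     = 4 ^ r * INR (rising (S m) r) * (4 * INR (S m) * Gr g m (S r) t - 2 * INR r * Gr g (S m) (pred r) t)).
  { transitivity (Dr (LHSr r (S m)) t).
    - rewrite DLHS by auto. apply sum_n_ext_loc. intros l Hl.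
      destruct (div2_facts r).
      replace (S (r - 2 * l)) with (S r - 2 * l)%nat by lia.
      replace (S m + r - l)%nat with (m + S r - l)%nat by lia. reflexivity.
    - unfold Dr. rewrite (Derive_ext_loc _ (fun s => 4 ^ r * INR (rising (S m) r) * Gr g (S m) r s)).
      + rewrite Derive_scal. rewrite (is_derive_unique _ _ _ (Gr_deriv g Hg m r t Ht)).
        match goal with |- ?a = ?b => change (@eq R a b) end. field. lra.
      + apply loc01; auto. }
  rewrite E1. clear E1.
  destruct r as [|r'].
  - assert (Hm : INR (rising m 1) = INR (S m)) by (f_equal; simpl; lia). rewrite Hm. change (INR 0) with 0. match goal with |- ?a = ?b => change (@eq R a b) end. change (INR (rising (S m) 0)) with 1. ring.
  - assert (E2 : sum_n (fun l => cf (pred (S r')) (S m) l * Dnr (S (S r') - 2 * S l) (Gr g (m + S (S r') - S l) 0) t) (pred (S r') / 2)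
       = LHSr (pred (S r')) (S m) t).
    { unfold LHSr. apply sum_n_ext_loc. intros l Hl. simpl pred.
      replace (S (S r') - 2 * S l)%nat with (r' - 2 * l)%nat by lia.
      replace (m + S (S r') - S l)%nat with (S m + r' - l)%nat by lia. reflexivity. }
    rewrite E2, IH2 by auto. clear E2.
    rewrite (rising_S m (S r')). simpl pred. change (rising (S m) (S r')) with (rising (S m) r' * (S m + S r'))%nat.
    rewrite !mult_INR, !plus_INR, !S_INR. simpl pow. change (INR 0) with 0. match goal with |- ?a = ?b => change (@eq R a b) end. ring.
Qed.
End Main.

Lemma all_claims g (Hg : forall u, 0 < u -> continuous g u) r : Claim g r /\ Claim g (S r).
Proof.
  assert (C0 : Claim g 0).
  { intros m t Ht. unfold LHSr. change (0 / 2)%nat with 0%nat. rewrite sum_O, cf0.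
    replace (m + 0 - 0)%nat with m by lia. simpl. ring. }
  induction r.
  - split; auto. apply step; auto.
  - destruct IHr as [H1 H2]. split; auto. apply step; auto.
Qed.

Lemma Re_sum (F : nat -> C) N : Re (sum_n F N) = sum_n (fun l => Re (F l)) N.
Proof.
  induction N.
  - rewrite !sum_O. reflexivity.
  - rewrite !sum_Sn. rewrite <- IHN. reflexivity.
Qed.

Lemma Im_sum (F : nat -> C) N : Im (sum_n F N) = sum_n (fun l => Im (F l)) N.
Proof.
  induction N.
  - rewrite !sum_O. reflexivity.
  - rewrite !sum_Sn. rewrite <- IHN. reflexivity.
Qed.
From Stdlib Require Import FunctionalExtensionality.

Lemma Re_Dn k (phi : R -> C) : (fun t => Re (Dn k phi t)) = Dnr k (fun s => Re (phi s)).
Proof.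
  induction k.
  - reflexivity.
  - apply functional_extensionality. intros t.
    change (Re (Dop (Dn k phi) t) = Dr (Dnr k (fun s => Re (phi s))) t).
    unfold Dop, Dr, CDerive. rewrite <- IHk. simpl. ring.
Qed.

Lemma Im_Dn k (phi : R -> C) : (fun t => Im (Dn k phi t)) = Dnr k (fun s => Im (phi s)).
Proof.
  induction k.
  - reflexivity.
  - apply functional_extensionality. intros t.
    change (Im (Dop (Dn k phi) t) = Dr (Dnr k (fun s => Im (phi s))) t).
    unfold Dop, Dr, CDerive. rewrite <- IHk. simpl. ring.
Qed.

Lemma Re_G f i j : (fun t => Re (G f i j t)) = Gr (fun u => Re (f u)) i j.
Proof.
  apply functional_extensionality. intros t. unfold G, CRInt, Gr. simpl.
  apply RInt_ext. intros u _. unfold hh, PP, Re, Im. simpl. match goal with |- ?a = ?b => change (@eq R a b) end. ring.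
Qed.

Lemma Im_G f i j : (fun t => Im (G f i j t)) = Gr (fun u => Im (f u)) i j.
Proof.
  apply functional_extensionality. intros t. unfold G, CRInt, Gr. simpl.
  apply RInt_ext. intros u _. unfold hh, PP, Re, Im. simpl. match goal with |- ?a = ?b => change (@eq R a b) end. ring.
Qed.

Lemma Re_Cm (c : R) (z : C) : Re (RtoC c * z)%C = c * Re z.
Proof. unfold Re; simpl. ring. Qed.
Lemma Im_Cm (c : R) (z : C) : Im (RtoC c * z)%C = c * Im z.
Proof. unfold Im; simpl. ring. Qed.
Lemma Re_Dn_pt k (phi : R -> C) t : Re (Dn k phi t) = Dnr k (fun s => Re (phi s)) t.
Proof. rewrite <- Re_Dn. reflexivity. Qed.
Lemma Im_Dn_pt k (phi : R -> C) t : Im (Dn k phi t) = Dnr k (fun s => Im (phi s)) t.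
Proof. rewrite <- Im_Dn. reflexivity. Qed.

Theorem lemma3p6 (f : R -> C) (rho : R)
  (Hsmooth : smooth_on_nonneg f) (Hrho : rho < 1)
  (Hsupp : forall u, 0 <= u -> ~ (0 <= u <= rho) -> f u = RtoC 0)
  (r m : nat) (t : R) (Ht : 0 < t < 1) :
  sum_n (fun l : nat =>
      (RtoC (2 ^ (2 * l) * INR (fact r) / (INR (fact l) * INR (fact (r - 2 * l)))
             * (INR (fact (m + r)) / INR (fact (m + r - l))))
       * Dn (r - 2 * l) (G f (m + r - l) 0) t)%C)
    (Nat.div r 2)
  = (RtoC (4 ^ r * INR (rising m r)) * G f m r t)%C.
Proof.
  assert (HRe : forall u, 0 < u -> continuous (fun u => Re (f u)) u).
  { intros u Hu. destruct (Hsmooth 1%nat u Hu) as [H _]. simpl in H.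
    apply (@ex_derive_continuous R_AbsRing R_NormedModule). exact H. }
  assert (HIm : forall u, 0 < u -> continuous (fun u => Im (f u)) u).
  { intros u Hu. destruct (Hsmooth 1%nat u Hu) as [_ H]. simpl in H.
    apply (@ex_derive_continuous R_AbsRing R_NormedModule). exact H. }
  apply injective_projections.
  - change (Re (sum_n (fun l : nat =>
      (RtoC (2 ^ (2 * l) * INR (fact r) / (INR (fact l) * INR (fact (r - 2 * l)))
             * (INR (fact (m + r)) / INR (fact (m + r - l))))
       * Dn (r - 2 * l) (G f (m + r - l) 0) t)%C) (Nat.div r 2))
      = Re (RtoC (4 ^ r * INR (rising m r)) * G f m r t)%C).
    rewrite Re_sum.
    destruct (all_claims _ HRe r) as [Hc _].
    specialize (Hc m t Ht). unfold LHSr in Hc.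
    transitivity (sum_n (fun l => cf r m l * Dnr (r - 2 * l) (Gr (fun u => Re (f u)) (m + r - l) 0) t) (r / 2)).
    + apply sum_n_ext. intros l.
      rewrite Re_Cm, Re_Dn_pt, Re_G. reflexivity.
    + etransitivity; [exact Hc|]. rewrite Re_Cm. rewrite <- Re_G. reflexivity.
  - change (Im (sum_n (fun l : nat =>
      (RtoC (2 ^ (2 * l) * INR (fact r) / (INR (fact l) * INR (fact (r - 2 * l)))
             * (INR (fact (m + r)) / INR (fact (m + r - l))))
       * Dn (r - 2 * l) (G f (m + r - l) 0) t)%C) (Nat.div r 2))
      = Im (RtoC (4 ^ r * INR (rising m r)) * G f m r t)%C).
    rewrite Im_sum.
    destruct (all_claims _ HIm r) as [Hc _].
    specialize (Hc m t Ht). unfold LHSr in Hc.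
    transitivity (sum_n (fun l => cf r m l * Dnr (r - 2 * l) (Gr (fun u => Im (f u)) (m + r - l) 0) t) (r / 2)).
    + apply sum_n_ext. intros l.
      rewrite Im_Cm, Im_Dn_pt, Im_G. reflexivity.
    + etransitivity; [exact Hc|]. rewrite Im_Cm. rewrite <- Im_G. reflexivity.
Qed.
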